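(* Let $\Gamma$ be a countably infinite discrete group and let $\boldsymbol{a}$ be a measure preserving action of $\Gamma$. The following are equivalent: (1) every non-trivial factor of $\boldsymbol{a}$ has finite kernel; (2) every infinite normal subgroup of $\Gamma$ acts ergodically (under the restriction of $\boldsymbol{a}$).
   Context: A measure preserving action $\boldsymbol{a}=\Gamma\curvearrowright^a (X,\mu)$ consists of a standard Borel space $X$, a Borel probability measure $\mu$, and a Borel $\mu$-preserving action of $\Gamma$ on $X$. An action $\boldsymbol{b}=\Gamma\curvearrowright^b (Y,\nu)$ is a factor of $\boldsymbol{a}$ if there is a measurable $\pi:X\to Y$ with $\pi_*\mu=\nu$ and, for each $\gamma\in\Gamma$, $\pi(\gamma^a x)=\gamma^b\pi(x)$ for $\mu$-a.e. $x$. An action is non-trivial if its measure is not a point mass. The kernel of $\boldsymbol{b}$ is $\{\gamma\in\Gamma : \nu(\{y : \gamma^b y = y\})=1\}$. *)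

(* Defs.v *)
From HB Require Import structures.
From mathcomp Require Import all_boot all_order all_algebra.
From mathcomp Require Import all_classical all_reals all_analysis.
From mathcomp Require monoid.

Set Implicit Arguments.
Unset Strict Implicit.
Unset Printing Implicit Defensive.

Import Order.TTheory GRing.Theory Num.Theory.
Local Open Scope classical_set_scope.
Local Open Scope ring_scope.

Notation gmul := (@monoid.mul _).
Notation gone := (@monoid.one _).
Notation ginv := (@monoid.inv _).

Definition countably_infinite (G : Type) :=
  countable [set: G] /\ infinite_set [set: G].

Definition normal_subgroup (G : groupType) (N : set G) :=
  [/\ N gone,
      (forall g h, N g -> N h -> N (gmul g h)),
      (forall g, N g -> N (ginv g)) &
      (forall g n, N n -> N (gmul (ginv g) (gmul n g)))].

(* Standard Borel space: Borel isomorphic to a Borel subset of R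
   (equivalently, by Kuratowski's theorem, to a Borel subset of a Polish space). *)
Definition standard_borel (R : realType) (d : measure_display)
    (X : measurableType d) :=
  exists f : X -> R,
    [/\ injective f, measurable_fun setT f, measurable (range f) &
        forall A, measurable A -> measurable (f @` A)].

Definition mp_action (G : groupType) (R : realType) (d : measure_display)
    (X : measurableType d) (mu : set X -> \bar R) (act : G -> X -> X) :=
  [/\ (forall x, act gone x = x),
      (forall g h x, act (gmul g h) x = act g (act h x)),
      (forall g, measurable_fun setT (act g)) &
      (forall g A, measurable A -> mu (act g @^-1` A) = mu A)].

Definition is_factor (G : groupType) (R : realType)
    (d : measure_display) (X : measurableType d) (mu : {measure set X -> \bar R})
    (act : G -> X -> X)
    (d' : measure_display) (Y : measurableType d') (nu : set Y -> \bar R)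
    (actY : G -> Y -> Y) :=
  exists pi : X -> Y,
    [/\ measurable_fun setT pi,
        (forall B, measurable B -> mu (pi @^-1` B) = nu B) &
        forall g, {ae mu, forall x, pi (act g x) = actY g (pi x)}].

Definition nontrivial (R : realType) (d : measure_display) (Y : measurableType d)
    (nu : set Y -> \bar R) :=
  ~ exists y : Y, forall B, measurable B -> nu B = \d_y B.

Definition action_kernel (G : groupType) (R : realType) (d : measure_display)
    (Y : measurableType d) (nu : set Y -> \bar R) (actY : G -> Y -> Y) : set G :=
  [set g | nu [set y | actY g y = y] = 1%E].

Definition ergodic_on (G : groupType) (R : realType) (d : measure_display)
    (X : measurableType d) (mu : set X -> \bar R) (act : G -> X -> X) (N : set G) :=
  forall A, measurable A -> (forall g, N g -> act g @^-1` A = A) ->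
    mu A = 0%E \/ mu A = 1%E.

(* Main.v *)
Require Import Defs.
From HB Require Import structures.
From mathcomp Require Import all_boot all_order all_algebra.
From mathcomp Require Import all_classical all_reals all_analysis.
From mathcomp Require Import measurable_realfun.
From mathcomp Require Import lra.
From mathcomp Require monoid.
Import Order.TTheory GRing.Theory Num.Theory.
Import numFieldNormedType.Exports.
Local Open Scope classical_set_scope.
Local Open Scope ring_scope.

Section Code.
Variable R : realType.

Fixpoint psum (m : nat) (f : nat -> bool) : R :=
  if m is m'.+1 then ((f 0%N)%:R + psum m' (fun k => f k.+1)) / 3 else 0.

Lemma psum_ge0 m f : 0 <= psum m f.
Proof.
elim: m f => [//|m IH] f /=.
by apply: divr_ge0 => //; apply: addr_ge0 => //.
Qed.

Lemma psum_le m f : psum m f <= 2^-1.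
Proof.
elim: m f => [|m IH] f /=; first by rewrite invr_ge0.
have h1 : (f 0%N)%:R <= 1 :> R by case: (f 0%N).
have h2 := IH (fun k => f k.+1).
rewrite ler_pdivrMr //; lra.
Qed.

Lemma psum_S m f : psum m f <= psum m.+1 f.
Proof.
elim: m f => [|m IH] f /=; first by rewrite -/(psum 1 f) (psum_ge0 1 f).
rewrite ler_pM2r ?invr_gt0 // lerD2l; exact: IH.
Qed.

Lemma psum_cvg f : cvgn (psum ^~ f : R^nat).
Proof.
apply: nondecreasing_is_cvgn.
  by apply/nondecreasing_seqP => n; exact: psum_S.
by exists 2^-1 => _ [n _ <-]; exact: psum_le.
Qed.

Definition code (f : nat -> bool) : R := limn (psum ^~ f).

Lemma code_cvg f : (psum ^~ f : R^nat) @ \oo --> code f.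
Proof. exact: psum_cvg. Qed.

Lemma code_ge0 f : 0 <= code f.
Proof. apply: limr_ge; first exact: psum_cvg. by near=> n; exact: psum_ge0. Unshelve. all: by end_near. Qed.

Lemma code_le f : code f <= 2^-1.
Proof. apply: limr_le; first exact: psum_cvg. by near=> n; exact: psum_le. Unshelve. all: by end_near. Qed.

Lemma code_rec f : code f = ((f 0%N)%:R + code (fun k => f k.+1)) / 3.
Proof.
have h1 : (fun m => psum m.+1 f) @ \oo --> code f.
  by have := code_cvg f; rewrite -cvg_shiftS.
have h2 : (fun m => psum m.+1 f) @ \oo --> ((f 0%N)%:R + code (fun k => f k.+1)) / 3.
  rewrite /=; apply: cvgMl; apply: cvgD; first exact: cvg_cst.
  exact: code_cvg.
exact: (cvg_unique _ h1 h2).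
Qed.


Lemma code_third f : (3^-1 <= code f) = f 0%N.
Proof.
have h0 := code_ge0 (fun k => f k.+1); have h1 := code_le (fun k => f k.+1).
rewrite code_rec; case: (f 0%N) => /=.
  apply/idP; rewrite ler_pdivlMr //; lra.
apply/negbTE; rewrite -ltNge ltr_pdivrMr //; lra.
Qed.

Fixpoint rem (n : nat) (y : R) : R :=
  if n is n'.+1 then 3 * rem n' y - (nat_of_bool (3^-1 <= rem n' y))%:R else y.

Definition dig n (y : R) : bool := 3^-1 <= rem n y.

Lemma rem_code n f : rem n (code f) = code (fun k => f (k + n)%N).
Proof.
elim: n => [|n IH] /=.
  by congr code; apply: funext => k; rewrite addn0.
rewrite IH code_third add0n [X in 3 * X]code_rec.
have -> : (fun k => f (k.+1 + n)%N) = (fun k => f (k + n.+1)%N).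
  by apply: funext => k; rewrite addSnnS.
set a := (f n)%:R; set b := code _.
have -> : 3 * ((a + b) / 3) = a + b by rewrite mulrC divfK // pnatr_eq0.
by rewrite addrC addKr.
Qed.

Lemma dig_code n f : dig n (code f) = f n.
Proof. by rewrite /dig rem_code code_third add0n. Qed.

End Code.

Section Meas.
Variable R : realType.
Context d (T : measurableType d).

Lemma measurable_boolR (b : T -> bool) : measurable [set y | b y] ->
  measurable_fun setT (fun y => (b y)%:R : R).
Proof.
move=> mb.
have -> : (fun y => (b y)%:R : R) = \1_[set y | b y].
  by apply: funext => y; rewrite indicE mem_setE.
exact: measurable_indic.
Qed.

Lemma measurable_psum m (b : nat -> T -> bool) :
  (forall k, measurable [set y | b k y]) ->
  measurable_fun setT (fun y => psum R m (fun k => b k y)).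
Proof.
elim: m b => [|m IH] b mb /=; first exact: measurable_cst.
apply: measurable_funM; last exact: measurable_cst.
apply: measurable_funD; first exact: measurable_boolR.
exact: (IH (fun k => b k.+1)).
Qed.

Lemma measurable_code (b : nat -> T -> bool) :
  (forall k, measurable [set y | b k y]) ->
  measurable_fun setT (fun y => code R (fun k => b k y)).
Proof.
move=> mb; apply: (measurable_fun_cvg (h := fun m y => psum R m (fun k => b k y))).
  by move=> m; exact: measurable_psum.
by move=> y _; exact: code_cvg.
Qed.

End Meas.

Section MeasR.
Variable R : realType.

Lemma measurable_rem n : measurable_fun setT (@rem R n).
Proof.
elim: n => [|n IH] /=; first exact: measurable_id.
apply: measurable_funB.
  by apply: measurable_funM => //; exact: measurable_cst.
apply: (@measurable_boolR R _ R (fun y => 3^-1 <= @rem R n y)).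
rewrite -[X in measurable X]setTI.
have -> : [set y | 3^-1 <= @rem R n y] = @rem R n @^-1` `[3^-1, +oo[.
  by apply/seteqP; split => y /=; rewrite in_itv /= andbT.
exact: IH.
Qed.

Lemma measurable_dig n : measurable [set y : R | @dig R n y].
Proof.
rewrite -[X in measurable X]setTI.
have -> : [set y : R | @dig R n y] = @rem R n @^-1` `[3^-1, +oo[.
  by apply/seteqP; split => y /=; rewrite /dig in_itv /= andbT.
exact: measurable_rem.
Qed.

End MeasR.


Section Fwd.
Variables (G : groupType) (R : realType) (d : measure_display) (X : measurableType d).
Variables (mu : probability X R) (act : G -> X -> X).
Hypothesis Hact : mp_action mu act.
Local Notation dig := (@dig R).
Local Notation dig_code := (@dig_code R).
Variables (j : G -> nat) (jinj : injective j).
Variables (A : set X) (mA : measurable A).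

Definition ee (n : nat) : G :=
  match pselect (exists g, j g = n) with
  | left h => projT1 (cid h)
  | right _ => gone
  end.

Lemma ee_j g : ee (j g) = g.
Proof.
rewrite /ee; case: pselect => [h|h]; last by exfalso; apply: h; exists g.
by case: cid => /= g' /jinj.
Qed.

Definition inR n := j (ee n) == n.

Lemma inR_j g : inR (j g).
Proof. by rewrite /inR ee_j. Qed.

Definition pi (x : X) : R := code R (fun n => inR n && (act (ee n) x \in A)).

Definition dec (y : R) := fun n => inR n && dig n y.
Definition isCode (y : R) := code R (dec y) == y.

Definition actY (g : G) (y : R) : R :=
  if isCode y then code R (fun n => inR n && dig (j (gmul (ee n) g)) y) else y.

Lemma isCode_code (f : nat -> bool) : (forall n, f n -> inR n) -> isCode (code R f).
Proof.
move=> hf; rewrite /isCode; apply/eqP; congr code; apply: funext => n.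
rewrite /dec dig_code; case fn: (f n) => //; first by rewrite (hf _ fn).
by rewrite andbF.
Qed.

Lemma dig_isCode y n : isCode y -> dig n y = inR n && dig n y.
Proof. by move=> /eqP <-; rewrite dig_code /dec; case: inR. Qed.

Lemma pi_isCode x : isCode (pi x).
Proof. by apply: isCode_code => n /andP[]. Qed.

Lemma actY_pi g x : actY g (pi x) = pi (act g x).
Proof.
case: Hact => _ amul _ _.
rewrite /actY pi_isCode /pi; congr code; apply: funext => n.
rewrite dig_code inR_j ee_j /= amul; by case: inR.
Qed.

Lemma actY1 y : actY gone y = y.
Proof.
rewrite /actY; case cy: (isCode y) => //.
move/eqP: (cy) => {2}<-; congr code; apply: funext => n.
rewrite /dec monoid.mulg1; case rn: (inR n) => //=.
by move/eqP: rn => ->.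
Qed.

Lemma actYM g h y : actY (gmul g h) y = actY g (actY h y).
Proof.
rewrite /actY; case cy: (isCode y); last by rewrite cy.
have -> : isCode (code R (fun n => inR n && dig (j (gmul (ee n) h)) y)).
  by apply: isCode_code => n /andP[].
congr code; apply: funext => n.
by rewrite dig_code inR_j ee_j monoid.mulgA.
Qed.


Lemma measurable_pi : measurable_fun setT pi.
Proof.
case: Hact => _ _ mact _.
apply: (@measurable_code R _ X (fun k x => inR k && (act (ee k) x \in A))) => k.
case: (inR k) => /=.
  have -> : [set x | act (ee k) x \in A] = act (ee k) @^-1` A.
    by apply/seteqP; split => x /=; rewrite in_setE.
  by rewrite -[X in measurable X]setTI; exact: mact.
by have -> : [set x : X | false] = set0 by apply/seteqP; split.
Qed.

Lemma measurable_isCode : measurable [set y : R | isCode y].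
Proof.
have mc : measurable_fun setT (fun y => code R (dec y)).
  apply: (@measurable_code R _ R (fun k y => inR k && dig k y)) => k.
  case: (inR k) => /=; first exact: measurable_dig.
  by have -> : [set x : R | false] = set0 by apply/seteqP; split.
have mB : measurable_fun setT (fun y => code R (dec y) - y).
  by apply: measurable_funB => //; exact: measurable_id.
have -> : [set y : R | isCode y] = setT `&` (fun y => code R (dec y) - y) @^-1` [set 0].
  apply/seteqP; split => y /=.
    by rewrite /isCode => /eqP ->; rewrite subrr.
  by move=> [_ /eqP]; rewrite subr_eq0.
exact: mB.
Qed.

Lemma measurable_actY g : measurable_fun setT (actY g).
Proof.
apply: measurable_fun_ifT; last exact: measurable_id.
  apply: (measurable_fun_bool true).
  rewrite setTI; have -> : isCode @^-1` [set true] = [set y | isCode y] by [].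
  exact: measurable_isCode.
apply: (@measurable_code R _ R (fun k y => inR k && dig (j (gmul (ee k) g)) y)) => k.
case: (inR k) => /=; first exact: measurable_dig.
by have -> : [set x : R | false] = set0 by apply/seteqP; split.
Qed.

Definition PI := mfun_Sub (mem_set measurable_pi).
Definition nuY : probability R R := distribution mu PI.

Lemma nuYE B : nuY B = mu (pi @^-1` B).
Proof. by []. Qed.

Lemma mp_actionY : mp_action nuY actY.
Proof.
split; [exact: actY1 | exact: actYM | exact: measurable_actY |].
move=> g B mB; rewrite !nuYE.
have -> : pi @^-1` (actY g @^-1` B) = act g @^-1` (pi @^-1` B).
  by apply/seteqP; split => x /=; rewrite actY_pi.
case: Hact => _ _ _ ->//.
by rewrite -[X in measurable X]setTI; exact: measurable_pi.
Qed.

Lemma factorY : is_factor mu act nuY actY.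
Proof.
exists pi; split; [exact: measurable_pi | by [] |].
by move=> g; apply: aeW => x; rewrite actY_pi.
Qed.

Lemma standardR : standard_borel R R.
Proof.
exists id; split => //; first by rewrite image_id.
by move=> B mB; rewrite image_id.
Qed.

Lemma kernelY (N : set G) : normal_subgroup N ->
  (forall g, N g -> act g @^-1` A = A) -> N `<=` action_kernel nuY actY.
Proof.
case=> _ _ _ Nc inv n Nn; rewrite /action_kernel /= nuYE.
case: Hact => _ amul _ _.
suff -> : pi @^-1` [set y | actY n y = y] = setT by rewrite probability_setT.
apply/seteqP; split => // x _ /=; rewrite actY_pi /pi; congr code.
apply: funext => k; congr andb.
set g := ee k.
have Nn' : N (gmul g (gmul n (ginv g))).
  by have := Nc (ginv g) n Nn; rewrite monoid.invgK.
rewrite -amul.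
have -> : gmul g n = gmul (gmul g (gmul n (ginv g))) g.
  by rewrite -!monoid.mulgA monoid.mulVg monoid.mulg1.
rewrite amul; have := inv _ Nn'.
by move/(congr1 (fun S => act g x \in S)) => <-.
Qed.

Lemma nontrivialY : mu A <> 0%E -> mu A <> 1%E -> nontrivial nuY.
Proof.
move=> h0 h1 [y hy].
have mB : measurable [set z : R | dig (j gone) z] := measurable_dig _ _.
have := hy _ mB; rewrite nuYE diracE.
have -> : pi @^-1` [set z | dig (j gone) z] = A.
  case: Hact => a1 _ _ _.
  apply/seteqP; split => x /=; rewrite /pi dig_code inR_j ee_j a1 /= in_setE //.
by case: (y \in _) => /=.
Qed.

End Fwd.


Lemma countable_inj (G : Type) : countable [set: G] ->
  exists j : G -> nat, injective j.
Proof.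
move/pcard_leP/injfunPex => [f _ fi]; exists f => x y e.
by apply: fi => //; rewrite in_setE.
Qed.

Lemma fwd (G : groupType) (R : realType)
  (d : measure_display) (X : measurableType d) (mu : probability X R)
  (act : G -> X -> X) :
  countably_infinite G ->
  mp_action mu act ->
  (forall (d' : measure_display) (Y : measurableType d') (nu : probability Y R)
       (actY : G -> Y -> Y),
      standard_borel R Y -> mp_action nu actY ->
      is_factor mu act nu actY -> nontrivial nu ->
      finite_set (action_kernel nu actY)) ->
   (forall N : set G, normal_subgroup N -> infinite_set N ->
      ergodic_on mu act N).
Proof.
move=> [cG _] Hact H1 N nN infN A mA inv.
have [j jinj] := @countable_inj _ cG.
have [h0|h0] := pselect (mu A = 0%E); first by left.
have [h1|h1] := pselect (mu A = 1%E); first by right.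
exfalso; apply: infN.
have := H1 _ R (nuY _ _ _ _ _ _ Hact j _ mA) (actY _ _ j) (standardR R)
  (mp_actionY _ _ _ _ _ _ Hact j jinj _ mA) (factorY _ _ _ _ _ _ Hact j jinj _ mA)
  (nontrivialY _ _ _ _ _ _ Hact j jinj _ mA h0 h1).
apply: sub_finite_set; exact: (kernelY _ _ _ _ _ _ Hact j jinj _ mA _ nN inv).
Qed.

Section Prob.
Context d (T : measurableType d) (R : realType) (P : probability T R).

Lemma P1C A : measurable A -> P (~` A) = 0%E -> P A = 1%E.
Proof.
by move=> mA h; rewrite -[A]setCK probability_setC ?h ?sube0 //; exact: measurableC.
Qed.

Lemma PC1 A : measurable A -> P A = 1%E -> P (~` A) = 0%E.
Proof. by move=> mA h; rewrite probability_setC // h subee. Qed.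

Lemma PsetD0 A M : measurable A -> measurable M -> P M = 0%E -> P (A `\` M) = P A.
Proof.
move=> mA mM M0; rewrite [in RHS](measureDI _ mA mM).
rewrite -[LHS]adde0; congr (_ + _).
apply/esym/eqP; rewrite -measure_le0 -M0 le_measure ?inE //; exact: measurableI.
Qed.

End Prob.

Section Bwd.
Variables (G : groupType) (R : realType) (d : measure_display) (X : measurableType d).
Variables (mu : probability X R) (act : G -> X -> X).
Hypothesis Hact : mp_action mu act.
Variables (d' : measure_display) (Y : measurableType d') (nu : probability Y R).
Variables (actY : G -> Y -> Y).
Hypothesis HY : mp_action nu actY.
Variables (f : Y -> R) (finj : injective f) (fm : measurable_fun setT f).

Definition Fix g := [set y | actY g y = y].
Local Notation K := (action_kernel nu actY).

Lemma measurable_Fix g : measurable (Fix g).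
Proof.
case: HY => _ _ mY _.
have mh : measurable_fun setT (fun y => f (actY g y) - f y).
  apply: measurable_funB => //; exact: measurableT_comp.
have -> : Fix g = setT `&` (fun y => f (actY g y) - f y) @^-1` [set 0].
  apply/seteqP; split => y /=.
    by move=> ->; rewrite subrr.
  by move=> [_ /eqP]; rewrite subr_eq0 => /eqP /finj.
exact: mh.
Qed.

Lemma Fix_null g : K g -> nu (~` Fix g) = 0%E.
Proof. by move=> Kg; apply: PC1 => //; exact: measurable_Fix. Qed.

Lemma Fix_neg g : K g -> nu.-negligible (~` Fix g).
Proof.
move=> Kg; apply/negligibleP; last exact: Fix_null.
exact/measurableC/measurable_Fix.
Qed.

Lemma K_of g : nu.-negligible (~` Fix g) -> K g.
Proof.
move=> h; apply: P1C; first exact: measurable_Fix.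
apply/negligibleP => //; exact/measurableC/measurable_Fix.
Qed.

Lemma K1 : K gone.
Proof.
case: HY => a1 _ _ _; apply: K_of.
have -> : ~` Fix gone = set0 by apply/seteqP; split => y //=; rewrite /Fix /= a1.
exact: negligible_set0.
Qed.

Lemma KM g h : K g -> K h -> K (gmul g h).
Proof.
case: HY => _ aM _ _ Kg Kh; apply: K_of.
move: (negligibleU (Fix_neg _ Kg) (Fix_neg _ Kh)); apply: negligibleS.
move=> y /=; rewrite /Fix /= aM => hy.
apply: contrapT => /not_orP[/contrapT h1 /contrapT h2]; apply: hy.
by rewrite h2 h1.
Qed.

Lemma actYVK g y : actY g (actY (ginv g) y) = y.
Proof. by case: HY => a1 aM _ _; rewrite -aM monoid.mulgV a1. Qed.

Lemma actYKV g y : actY (ginv g) (actY g y) = y.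
Proof. by case: HY => a1 aM _ _; rewrite -aM monoid.mulVg a1. Qed.

Lemma KV g : K g -> K (ginv g).
Proof.
move=> Kg; apply: K_of.
have -> : ~` Fix (ginv g) = ~` Fix g; last exact: Fix_neg.
congr (~` _); apply/seteqP; split => y; rewrite /Fix /= => h.
  by rewrite -{1}h actYVK.
by rewrite -{1}h actYKV.
Qed.

Lemma Kconj g k : K k -> K (gmul (ginv g) (gmul k g)).
Proof.
case: HY => _ aM mY mp Kk.
rewrite /action_kernel /=.
have -> : [set y | actY (gmul (ginv g) (gmul k g)) y = y] = actY g @^-1` Fix k.
  apply/seteqP; split => y; rewrite /Fix /= !aM => h.
    by rewrite -{2}h actYVK.
  by rewrite h actYKV.
by rewrite mp //; exact: measurable_Fix.
Qed.

Lemma K_normal : normal_subgroup K.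
Proof.
split; [exact: K1 | exact: KM | exact: KV | exact: Kconj].
Qed.


Variables (pi : X -> Y) (mpi : measurable_fun setT pi)
  (push : forall B, measurable B -> mu (pi @^-1` B) = nu B)
  (aeq : forall g, {ae mu, forall x, pi (act g x) = actY g (pi x)}).
Variables (j : G -> nat) (jinj : injective j).
Hypothesis erg : ergodic_on mu act K.

Local Notation e := (ee G j).

Lemma zero_one B : measurable B -> nu B = 0%E \/ nu B = 1%E.
Proof.
move=> mB.
have mC : measurable (pi @^-1` B) by rewrite -[X in measurable X]setTI; exact: mpi.
set C := pi @^-1` B.
pose Bad g := [set x | K g /\ (pi (act g x) <> actY g (pi x) \/ actY g (pi x) <> pi x)].
have negBad g : mu.-negligible (Bad g).
  have [Kg|nKg] := pselect (K g); last first.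
    have -> : Bad g = set0 by apply/seteqP; split => x // [].
    exact: negligible_set0.
  have h1 : mu.-negligible (~` [set x | pi (act g x) = actY g (pi x)]) := aeq g.
  have h2 : mu.-negligible (pi @^-1` (~` Fix g)).
    apply/negligibleP.
      by rewrite -[X in measurable X]setTI; apply: mpi => //; exact/measurableC/measurable_Fix.
    by apply: eq_trans (push _ (measurableC (measurable_Fix g))) _; exact: Fix_null.
  move: (negligibleU h1 h2); apply: negligibleS.
  by move=> x [_ [h|h]]; [left|right].
have : mu.-negligible (\bigcup_k Bad (e k)) by apply: negligible_bigcup => k; exact: negBad.
case=> M [mM M0 BM].
pose A := [set x | forall g, K g -> C (act g x)].
have AE : A = \bigcap_k [set x | K (e k) -> C (act (e k) x)].
  apply/seteqP; split => x /=.
    by move=> h k _; exact: h.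
  by move=> h g Kg; have := h (j g) I; rewrite ee_j //; apply.
have mA : measurable A.
  rewrite AE; apply: bigcapT_measurable => k.
  have [Kk|nKk] := pselect (K (e k)).
    have -> : [set x | K (e k) -> C (act (e k) x)] = setT `&` act (e k) @^-1` C.
      by apply/seteqP; split => x /=; [move=> h; split => //; exact: h | case].
    by case: Hact => _ _ mact _; exact: mact.
  have -> : [set x | K (e k) -> C (act (e k) x)] = setT.
    by apply/seteqP; split => x // _ /nKk.
  exact: measurableT.
have invA g : K g -> act g @^-1` A = A.
  case: Hact => _ aM _ _ Kg.
  apply/seteqP; split => x /=.
    move=> h g' Kg'.
    have := h (gmul g' (ginv g)) (KM _ _ Kg' (KV _ Kg)).
    by rewrite -aM -monoid.mulgA monoid.mulVg monoid.mulg1.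
  by move=> h g' Kg'; rewrite -aM; apply: h; exact: KM.
have AC : mu A = mu C.
  apply/le_anti/andP; split.
    apply: le_measure; rewrite ?inE //.
    case: Hact => a1 _ _ _ x /(_ gone K1); by rewrite a1.
  apply: (@le_trans _ _ (mu (C `\` M))); first by rewrite PsetD0.
  apply: le_measure; rewrite ?inE //; first exact: measurableD.
  move=> x [Cx nMx] g Kg.
  have nB : ~ Bad g x.
    by move=> bx; apply: nMx; apply: BM; exists (j g) => //; rewrite ee_j.
  have [h1 h2] : pi (act g x) = actY g (pi x) /\ actY g (pi x) = pi x.
    by split; apply: contrapT => h; apply: nB; split => //; [left|right].
  by rewrite /C /= h1 h2.
by rewrite -push // -AC; exact: erg.
Qed.

End Bwd.

Lemma small_inv (R : realType) (e : R) : 0 < e -> exists n : nat, (n.+1%:R)^-1 < e.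
Proof.
move=> e0.
have ep : 0 < e^-1 by rewrite invr_gt0.
have h := archi_boundP (ltW ep).
move: (Num.Def.archi_bound e^-1) h => n h; exists n.
rewrite -[X in _ < X]invrK ltf_pV2 ?posrE ?invr_gt0 ?ltr0n //.
apply: (lt_le_trans h); by rewrite ler_nat.
Qed.

Lemma big_nat_bound (R : realType) (x : R) : exists n : nat, `|x| <= n%:R.
Proof. exists (Num.Def.archi_bound `|x|); exact/ltW/archi_boundP. Qed.

Section Dirac.
Context d (Y : measurableType d) (R : realType) (nu : probability Y R).
Variables (f : Y -> R) (finj : injective f) (fm : measurable_fun setT f).
Hypothesis zo : forall B, measurable B -> nu B = 0%E \/ nu B = 1%E.

Let L (t : R) := f @^-1` `]-oo, t].
Let mL t : measurable (L t).
Proof. by rewrite /L -[X in measurable X]setTI; apply: fm => //; exact: measurable_itv. Qed.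

Let negl0 A : measurable A -> nu A = 0%E -> nu.-negligible A.
Proof. by move=> mA h; apply/negligibleP. Qed.

Let not_negT : ~ nu.-negligible setT.
Proof.
move/(negligibleP _ measurableT) => h.
have := eq_trans (esym h) (probability_setT nu).
by move/eqP; rewrite eq_sym onee_eq0.
Qed.

Let le01 A B : measurable A -> measurable B -> A `<=` B -> nu A = 1%E -> nu B = 1%E.
Proof.
move=> mA mB AB h; case: (zo _ mB) => // h0; exfalso.
have : (nu A <= nu B)%E by apply: le_measure => //; rewrite inE.
by rewrite h h0 lee_fin ler10.
Qed.

Let le00 A B : measurable A -> measurable B -> A `<=` B -> nu B = 0%E -> nu A = 0%E.
Proof.
move=> mA mB AB h; apply/eqP; rewrite -measure_le0 -h.
by apply: le_measure => //; rewrite inE.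
Qed.

Let S := [set t | nu (L t) = 1%E].

Let S_up s t : s <= t -> S s -> S t.
Proof.
move=> st; apply: le01 => //; move=> y; rewrite /L /= !in_itv /= => h.
exact: le_trans h st.
Qed.

Let S_ne : exists t, S t.
Proof.
apply: contrapT => hne; apply: not_negT.
have h n : nu (L n%:R) = 0%E.
  by case: (zo _ (mL n%:R)) => // h1; exfalso; apply: hne; exists n%:R.
have : nu.-negligible (\bigcup_n L n%:R).
  by apply: negligible_bigcup => n; apply: negl0.
apply: negligibleS => y _; have [n hn] := big_nat_bound _ (f y).
exists n => //; rewrite /L /= in_itv /=.
exact: le_trans (ler_norm _) hn.
Qed.

Let S_lb : exists m : nat, nu (L (- m%:R)) = 0%E.
Proof.
apply: contrapT => hne; apply: not_negT.
have h n : nu (~` L (- n%:R)) = 0%E.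
  apply: PC1 => //; case: (zo _ (mL (- n%:R))) => // h1.
  by exfalso; apply: hne; exists n.
have : nu.-negligible (\bigcup_n ~` L (- n%:R)).
  by apply: negligible_bigcup => n; apply: negl0 => //; exact: measurableC.
apply: negligibleS => y _; have [n hn] := big_nat_bound _ (f y).
exists n.+1 => //; rewrite /L /= in_itv /=; apply/negP; rewrite -ltNge ltrNl.
have := ler_norm (- f y); rewrite normrN => h1.
apply: (le_lt_trans h1); apply: (le_lt_trans hn); by rewrite ltr_nat.
Qed.

Let has_infS : has_inf S.
Proof.
split; first by have [t St] := S_ne; exists t.
have [m hm] := S_lb; exists (- m%:R) => t St.
rewrite leNgt; apply/negP => tm.
have hsub : L t `<=` L (- m%:R).
  by move=> y; rewrite /L /= !in_itv /= => h; rewrite (le_trans h) // ltW.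
have := le00 _ _ (mL t) (mL (- m%:R)) hsub hm; rewrite St.
by move/eqP; rewrite onee_eq0.
Qed.

Let t0 := inf S.

Let S_t0 : S t0.
Proof.
apply: P1C => //; apply/(negligibleP _ (measurableC (mL t0))).
have h n : nu (~` L (t0 + (n.+1%:R)^-1)) = 0%E.
  apply: PC1 => //.
  have ep : (0 : R) < (n.+1%:R)^-1 by rewrite invr_gt0 ltr0n.
  have [s Ss hs] := inf_adherent ep has_infS.
  by apply: S_up Ss; exact: ltW.
have : nu.-negligible (\bigcup_n ~` L (t0 + (n.+1%:R)^-1)).
  by apply: negligible_bigcup => n; apply: negl0 => //; exact: measurableC.
apply: negligibleS => y; rewrite /L /= in_itv /= => /negP; rewrite -ltNge => hy.
have dp : 0 < f y - t0 by rewrite subr_gt0.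
have [n hn] := small_inv _ _ dp.
exists n => //=; rewrite in_itv /=; apply/negP; rewrite -ltNge -ltrBrDl //.
Qed.

Let U := f @^-1` `]-oo, t0[.
Let mU : measurable U.
Proof. by rewrite /U -[X in measurable X]setTI; apply: fm => //; exact: measurable_itv. Qed.

Let U0 : nu U = 0%E.
Proof.
apply/(negligibleP _ mU).
have h n : nu (L (t0 - (n.+1%:R)^-1)) = 0%E.
  case: (zo _ (mL (t0 - (n.+1%:R)^-1))) => // h1; exfalso.
  have h2 : t0 <= t0 - (n.+1%:R)^-1 := ge_inf has_infS.2 h1.
  have ep : (0:R) < (n.+1%:R)^-1 by rewrite invr_gt0.
  have : t0 - (n.+1%:R)^-1 < t0 by rewrite ltrBlDr ltrDl.
  by move/(le_lt_trans h2); rewrite ltxx.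

have : nu.-negligible (\bigcup_n L (t0 - (n.+1%:R)^-1)).
  by apply: negligible_bigcup => n; apply: negl0.
apply: negligibleS => y; rewrite /U /= in_itv /= => hy.
have dp : 0 < t0 - f y by rewrite subr_gt0.
have [n hn] := small_inv _ _ dp.
exists n => //=; rewrite /L /= in_itv /= lerBrDl addrC -lerBrDl.
exact: ltW.
Qed.

Let pt := L t0 `\` U.
Let mpt : measurable pt.
Proof. exact: measurableD. Qed.

Let pt1 : nu pt = 1%E.
Proof. exact: eq_trans (@PsetD0 _ _ _ nu _ _ (mL t0) mU U0) S_t0. Qed.

Let ptE z : pt z -> f z = t0.
Proof.
rewrite /pt /L /U /= !in_itv /= => -[h1 /negP h2].
by apply/eqP; rewrite eq_le h1 leNgt.
Qed.

Lemma dirac_of_01 : exists y, forall B, measurable B -> nu B = \d_y B.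
Proof.
have [[y py]|hne] := pselect (exists y, pt y); last first.
  exfalso; have : pt = set0 by apply/seteqP; split => y // py; apply: hne; exists y.
  move=> e0; have := pt1; rewrite e0 measure0 => /eqP.
  by rewrite eq_sym onee_eq0.
exists y => B mB; rewrite diracE.
have sub : pt `<=` [set y].
  by move=> z /ptE; rewrite -(ptE _ py) => /finj ->.
have [By|nBy] := pselect (B y).
  rewrite mem_set //=; apply: le01 mpt mB _ pt1.
  by move=> z /sub ->.
rewrite memNset //=; apply: le00 mB (measurableC mpt) _ _.
  by move=> z Bz ptz; apply: nBy; rewrite -(sub _ ptz).
exact: PC1.
Qed.

End Dirac.

Theorem proposition1p2 (G : groupType) (R : realType)
  (d : measure_display) (X : measurableType d) (mu : probability X R)
  (act : G -> X -> X) :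
  countably_infinite G ->
  standard_borel R X ->
  mp_action mu act ->
  ((forall (d' : measure_display) (Y : measurableType d') (nu : probability Y R)
       (actY : G -> Y -> Y),
      standard_borel R Y -> mp_action nu actY ->
      is_factor mu act nu actY -> nontrivial nu ->
      finite_set (action_kernel nu actY))
   <->
   (forall N : set G, normal_subgroup N -> infinite_set N ->
      ergodic_on mu act N)).
Proof.
move=> cG _ Hact; split; first exact: fwd.
move=> H2 d' Y nu actY [f [finj fm _ _]] HY [pi [mpi push aeq]] nt.
apply: contrapT => infK.
have [j jinj] := @countable_inj _ cG.1.
have erg := H2 _ (@K_normal G R d' Y nu actY HY f finj fm) infK.
apply: nt; apply: (@dirac_of_01 d' Y R nu f finj fm) => B mB.
exact: (@zero_one G R d X mu act Hact d' Y nu actY HY f finj fm pi mpi push aeq j jinj erg B mB).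
Qed.
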